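(* Let $\mathcal{Y}=\{1,\dots,K\}$, let $(X,Y)$ have clean posterior $\eta(x)=[P(Y=k\mid X=x)]_k$, and let the noisy label be generated by an instance-dependent transition matrix $T(x)$, $T_{ij}(x)=P(Y^n=j\mid Y=i,X=x)$, diagonally dominant ($T_{ii}(x)>T_{ij}(x)$ for $j\ne i$). Let $Y^*(x)=\arg\max_k\eta_k(x)$ and $\delta(x)=1-\eta_{Y^*(x)}(x)$. Consider the empirical overfitted case (training set of full support with exactly one noisy label $y^n\sim P(Y^n\mid X=x)$ per $x$, empirical risk minimized per sample), in which the NC model predicts the one-hot vector $\mathbf{e}_{y^n}$ and the FC model predicts the one-hot vector $\mathbf{e}_{k^*(y^n)}$, where $k^*(j)=\arg\max_k T_{kj}(x)$. Then: (a) To first order, with error terms $\varepsilon=\mathcal{O}(\mathbb{E}_X[\delta(X)])$, \[\mathrm{ACC}_{\mathtt{NC}}=\mathbb{E}_X\big[(1-\delta(X))T_{Y^*,Y^*}(X)\big]+\varepsilon,\qquad \mathrm{ACC}_{\mathtt{FC}}=\mathbb{E}_X\big[(1-\delta(X))C_{Y^*}(X)\big]+\varepsilon,\] where $C_{Y^*}(X)=\sum_{j:\,k^*(j)=Y^*}T_{Y^*,j}(X)$ and $Y^*=Y^*(X)$. (b) The prediction confidence equals $1$ everywhere for both methods, and $\mathrm{ECE}_{\mathtt{FC}}=1-\mathrm{ACC}_{\mathtt{FC}}$, $\mathrm{ECE}_{\mathtt{NC}}=1-\mathrm{ACC}_{\mathtt{NC}}$.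
   Context: Accuracy is measured against the clean label: $\mathrm{ACC}=\mathbb{E}_X[P(Y^f=Y\mid X)]$ where $Y^f$ is the predicted class ($y^n$ for NC, $k^*(y^n)$ for FC, with $y^n$ random). For a predictor with probability output $\hat p$, confidence is $C=\max_k\hat p_k$ and $\mathrm{ECE}=\mathbb{E}_C[|P(Y=Y^f\mid C)-C|]$. NC refers to minimizing cross-entropy $-\log\hat p_{y^n}(x)$ and FC to minimizing $-\log([T(x)^\top\hat p(x)]_{y^n})$; their per-sample minimizers over the probability simplex are the one-hot vectors stated. *)

(* Defs.v *)
From HB Require Import structures.
From mathcomp Require Import all_boot all_order all_algebra.
From mathcomp Require Import all_classical all_reals all_analysis.
Set Implicit Arguments. Unset Strict Implicit. Unset Printing Implicit Defensive.
Import Order.TTheory GRing.Theory Num.Theory.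
Local Open Scope ring_scope.

Section Defs.
Context {R : realType} {T : Type} {K : nat}.

(* eta x : clean posterior, eta x i = P(Y = i | X = x).
   Tm x i j = P(Y^n = j | Y = i, X = x).
   f x j    = predicted class when the observed noisy label is j
             (NC : f x j = j ; FC : f x j = k*(j)).                        *)

(* P(Y^f = Y | X = x), computed from the joint conditional law
   P(Y = i, Y^n = j | X = x) = eta x i * Tm x i j. *)
Definition cond_acc (eta : T -> 'I_K -> R) (Tm : T -> 'I_K -> 'I_K -> R)
  (f : T -> 'I_K -> 'I_K) (x : T) : R :=
  \sum_(i < K) \sum_(j < K) eta x i * Tm x i j * ((f x j == i)%:R).

Definition onehot (k : 'I_K) : 'I_K -> R := fun l => (l == k)%:R.

Definition confidence (p : 'I_K -> R) : R := \big[Num.max/0]_(k < K) p k.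

Definition is_prob_vector (p : 'I_K -> R) : Prop :=
  (forall k, 0 <= p k) /\ \sum_(k < K) p k = 1.

End Defs.

Section Measure.
Context {R : realType} {d : measure_display} {T : measurableType d} {K : nat}.
Local Open Scope ereal_scope.

Definition ACC (P : probability T R) eta Tm (f : T -> 'I_K -> 'I_K) : \bar R :=
  \int[P]_x (@cond_acc R T K eta Tm f x)%:E.

(* ECE = E_C[ | P(Y = Y^f | C) - C | ] for a confidence C taking its values
   in the finite list S (S duplicate free):
   ECE = sum_{c in S} P(C = c) | P(Y = Y^f | C = c) - c |
       = sum_{c in S} | P(Y = Y^f, C = c) - c P(C = c) |,
   where the joint law of (X, Y, Y^n) is P(dx) eta x i Tm x i j and the
   prediction on (x, Y^n = j) is phat x j, with predicted class f x j. *)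
Definition ECE (P : probability T R) eta Tm (phat : T -> 'I_K -> 'I_K -> R)
  (f : T -> 'I_K -> 'I_K) (S : seq R) : \bar R :=
  \sum_(c <- S)
    `| \int[P]_x (\sum_(i < K) \sum_(j < K)
          eta x i * Tm x i j * ((confidence (phat x j) == c)%:R)
          * ((f x j == i)%:R - c))%:E |.

End Measure.

(* Main.v *)
Require Import Defs.
From HB Require Import structures.
From mathcomp Require Import all_boot all_order all_algebra.
From mathcomp Require Import all_classical all_reals all_analysis.
From mathcomp Require Import lra measurable_realfun.
Import Order.TTheory GRing.Theory Num.Theory.
Local Open Scope ring_scope.

Set Implicit Arguments. Unset Strict Implicit.

Section Helpers.
Context {R : realType} {d : measure_display} {X : measurableType d} {K : nat}.

Lemma mf_indic (g : X -> 'I_K) k : measurable [set x | g x = k] ->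
  measurable_fun setT (fun x => ((g x == k)%:R : R)).
Proof.
move=> mA.
have -> : (fun x => ((g x == k)%:R : R)) = \1_[set x | g x = k].
  apply/funext => x; rewrite indicE; congr (_%:R).
  case: (eqVneq (g x) k) => [e|ne]; first by rewrite mem_set.
  by rewrite memNset //=; apply/eqP.
exact: measurable_realfun.measurable_indic.
Qed.

Lemma mf_comp (g : X -> 'I_K) (h : 'I_K -> X -> R) :
  (forall k, measurable [set x | g x = k]) ->
  (forall k, measurable_fun setT (h k)) ->
  measurable_fun setT (fun x => h (g x) x).
Proof.
move=> mg mh.
have -> : (fun x => h (g x) x) = (fun x => \sum_(k < K) (g x == k)%:R * h k x).
  apply/funext => x; rewrite (bigD1 (g x)) //= eqxx mul1r big1 ?addr0 //.
  by move=> k; rewrite eq_sym => /negbTE ->; rewrite mul0r.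
apply: measurable_sum => k; apply: measurable_realfun.measurable_funM => //; exact: mf_indic.
Qed.

Lemma integ (P : probability X R) (g : X -> R) : measurable_fun setT g ->
  (forall x, `|g x| <= 1) -> P.-integrable setT (EFin \o g).
Proof.
move=> mg gb; apply: measurable_bounded_integrable => //.
  rewrite (le_lt_trans (probability_le1 _ _)) // ?ltry //.
exists 1; split => // M M1 x _ /=.
exact: le_trans (gb x) (ltW M1).
Qed.

Lemma conf1 (k : 'I_K) : confidence (@onehot R K k) = 1.
Proof.
rewrite /confidence (bigD1 k) //=.
have h : \big[Num.max/0]_(i < K | i != k) onehot k i = 0 :> R.
  apply: (big_ind (fun v : R => v = 0)) => //; first by move=> a b -> ->; rewrite maxxx.
  by move=> i /negbTE; rewrite /onehot => ->.
by rewrite h /onehot eqxx maxEle ifF //; apply/negbTE; rewrite -ltNge ltr01.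
Qed.

Lemma sum_bound (eta : 'I_K -> R) (a : 'I_K -> R) (y : 'I_K) :
  is_prob_vector eta -> (forall i, 0 <= a i <= 1) ->
  0 <= \sum_i eta i * a i - eta y * a y <= 1 - eta y.
Proof.
move=> [e0 e1] ha.
have s1 : \sum_i eta i * a i = eta y * a y + \sum_(i < K | i != y) eta i * a i.
  by rewrite (bigD1 y).
have s2 : eta y + \sum_(i < K | i != y) eta i = 1 by rewrite -e1 [RHS](bigD1 y).
rewrite s1 -s2.
have h1 : 0 <= \sum_(i < K | i != y) eta i * a i.
  by apply: sumr_ge0 => i _; case/andP: (ha i) => ? ?; apply: mulr_ge0.
have h2 : \sum_(i < K | i != y) eta i * a i <= \sum_(i < K | i != y) eta i.
  by apply: ler_sum => i _; case/andP: (ha i) => ? ?; apply: ler_piMr.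
apply/andP; split; lra.
Qed.

Lemma cond_accE (eta : X -> 'I_K -> R) (Tm : X -> 'I_K -> 'I_K -> R) (f : X -> 'I_K -> 'I_K) x :
  cond_acc eta Tm f x =
  \sum_i eta x i * (\sum_j Tm x i j * ((f x j == i)%:R : R)).
Proof.
rewrite /cond_acc; apply: eq_bigr => i _; rewrite mulr_sumr.
by apply: eq_bigr => j _; rewrite mulrA.
Qed.

Lemma a_bound (t : 'I_K -> R) (f : 'I_K -> 'I_K) i : is_prob_vector t ->
  0 <= \sum_j t j * ((f j == i)%:R : R) <= 1.
Proof.
move=> [t0 t1]; apply/andP; split.
  by apply: sumr_ge0 => j _; apply: mulr_ge0.
rewrite -[leRHS]t1; apply: ler_sum => j _; case: (f j == i).
  by rewrite mulr1.
by rewrite mulr0.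
Qed.

Lemma mf_cond (eta : X -> 'I_K -> R) (Tm : X -> 'I_K -> 'I_K -> R) (f : X -> 'I_K -> 'I_K) :
  (forall k, measurable_fun setT (fun x => eta x k)) ->
  (forall i j, measurable_fun setT (fun x => Tm x i j)) ->
  (forall i j, measurable_fun setT (fun x => ((f x j == i)%:R : R))) ->
  measurable_fun setT (cond_acc eta Tm f).
Proof.
move=> me mT mf; rewrite /cond_acc.
apply: measurable_sum => i; apply: measurable_sum => j.
by apply: measurable_realfun.measurable_funM => //; apply: measurable_realfun.measurable_funM.
Qed.

Lemma part_a (P : probability X R) (F G D : X -> R) :
  measurable_fun setT F -> measurable_fun setT G -> measurable_fun setT D ->
  (forall x, `|F x| <= 1) -> (forall x, `|G x| <= 1) ->
  (forall x, 0 <= F x - G x <= D x) ->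
  (`| \int[P]_x (F x)%:E - \int[P]_x (G x)%:E | <= 1%:E * \int[P]_x (D x)%:E)%E.
Proof.
move=> mF mG mD bF bG hD.
rewrite mul1e -integralB_EFin //; try exact: integ.
have mB : measurable_fun setT (EFin \o (fun x => F x - G x)).
  by apply/measurable_EFinP; apply: measurable_realfun.measurable_funB.
under eq_integral do rewrite -EFinB.
apply: le_trans (le_abse_integral _ _ mB) _ => //.
apply: ge0_le_integral => //.
- by apply: measurableT_comp.
- by apply/measurable_EFinP.
- by move=> x _; have /andP[h1 h2] := hD x; rewrite /= lee_fin ger0_norm.
Qed.


Lemma cond_bound (eta : X -> 'I_K -> R) (Tm : X -> 'I_K -> 'I_K -> R)
  (f : X -> 'I_K -> 'I_K) x :
  is_prob_vector (eta x) -> (forall i, is_prob_vector (Tm x i)) ->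
  0 <= cond_acc eta Tm f x <= 1.
Proof.
move=> [e0 e1] hT; rewrite cond_accE; apply/andP; split.
  apply: sumr_ge0 => i _; apply: mulr_ge0 => //.
  by case/andP: (a_bound (f x) i (hT i)).
rewrite -[leRHS]e1; apply: ler_sum => i _; apply: ler_piMr => //.
by case/andP: (a_bound (f x) i (hT i)).
Qed.

Lemma main_a (P : probability X R) (eta : X -> 'I_K -> R)
  (Tm : X -> 'I_K -> 'I_K -> R) (ystar : X -> 'I_K) (f : X -> 'I_K -> 'I_K) :
  (forall k, measurable_fun setT (fun x => eta x k)) ->
  (forall i j, measurable_fun setT (fun x => Tm x i j)) ->
  (forall k, measurable [set x | ystar x = k]) ->
  (forall i j, measurable_fun setT (fun x => ((f x j == i)%:R : R))) ->
  (forall x, is_prob_vector (eta x)) ->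
  (forall x i, is_prob_vector (Tm x i)) ->
  (`| ACC P eta Tm f - \int[P]_x (eta x (ystar x) *
        \sum_(j < K) Tm x (ystar x) j * ((f x j == ystar x)%:R))%:E |
    <= 1%:E * \int[P]_x (1 - eta x (ystar x))%:E)%E.
Proof.
move=> me mT my mf he hT; rewrite /ACC.
have mA : forall k, measurable_fun setT
    (fun x => \sum_(j < K) Tm x k j * ((f x j == k)%:R : R)).
  by move=> k; apply: measurable_sum => j; apply: measurable_realfun.measurable_funM.
apply: part_a.
- exact: mf_cond.
- apply: (mf_comp (h := fun k x => eta x k * \sum_(j < K) Tm x k j * ((f x j == k)%:R : R))) => // k.
  exact: measurable_realfun.measurable_funM.
- apply: measurable_realfun.measurable_funB => //.
  exact: (mf_comp (h := fun k x => eta x k)).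
- move=> x; have /andP[h0 h1] := cond_bound f (he x) (hT x).
  by rewrite ger0_norm.
- move=> x; have [e0 e1] := he x.
  have /andP[a0 a1] := a_bound (f x) (ystar x) (hT x (ystar x)).
  have ey1 : eta x (ystar x) <= 1.
    by rewrite -e1 (bigD1 (ystar x)) //= lerDl; apply: sumr_ge0.
  by rewrite ger0_norm ?mulr_ge0 // mulr_ile1.
- move=> x; rewrite cond_accE.
  apply: (sum_bound (a := fun i => \sum_(j < K) Tm x i j * ((f x j == i)%:R : R))).
    exact: he.
  by move=> i; apply: a_bound.
Qed.

Lemma ece_lemma (P : probability X R) (eta : X -> 'I_K -> R)
  (Tm : X -> 'I_K -> 'I_K -> R) (f : X -> 'I_K -> 'I_K) (S : seq R) :
  (forall x, is_prob_vector (eta x)) -> (forall x i, is_prob_vector (Tm x i)) ->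
  measurable_fun setT (cond_acc eta Tm f) -> uniq S -> 1 \in S ->
  ECE P eta Tm (fun x j => @onehot R K (f x j)) f S = (1 - ACC P eta Tm f)%E.
Proof.
move=> he hT mc uS S1.
rewrite /ECE (bigD1_seq 1) //= big1 ?adde0; last first.
  move=> c c1.
  rewrite (eq_integral (fun _ => 0%E)) ?integral0 ?abse0 //.
  move=> x _ /=; congr EFin.
  rewrite big1 // => i _; rewrite big1 // => j _.
  by rewrite conf1 eq_sym (negbTE c1) mulr0 mul0r.
rewrite (eq_integral (fun x => (cond_acc eta Tm f x - 1)%:E)); last first.
  move=> x _; congr EFin; rewrite cond_accE.
  under eq_bigr => i _ do under eq_bigr => j _ do rewrite conf1 eqxx.
  have [e0 e1] := he x.
  rewrite -[X in _ - X]e1 -sumrB; apply: eq_bigr => i _.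
  rewrite -[X in _ = _ - X]mulr1 -[X in _ = _ - _ * X](proj2 (hT x i)).
  rewrite -mulrBr -sumrB mulr_sumr; apply: eq_bigr => j _.
  by rewrite (_ : (true%:R : R) = 1) // mulr1 -mulrA mulrBr mulr1.
have i1 : P.-integrable setT (EFin \o (fun _ : X => (1 : R))).
  by apply: integ => // x; rewrite normr1.
have ic : P.-integrable setT (EFin \o cond_acc eta Tm f).
  apply: integ => // x; have /andP[h0 h1] := cond_bound f (he x) (hT x).
  by rewrite ger0_norm.
under eq_integral do rewrite EFinB.
rewrite integralB_EFin //.
have I1 : (\int[P]_x (1 : R)%:E = 1)%E.
  rewrite integral_cst //.
  by rewrite mul1e; apply: probability_setT.
rewrite I1 /ACC.
have a0 : (0 <= \int[P]_x (cond_acc eta Tm f x)%:E)%E.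
  apply: integral_ge0 => x _; rewrite lee_fin.
  by case/andP: (cond_bound f (he x) (hT x)).
have a1 : (\int[P]_x (cond_acc eta Tm f x)%:E <= 1)%E.
  rewrite -[leRHS]I1; apply: le_integral => // x _; rewrite lee_fin.
  by case/andP: (cond_bound f (he x) (hT x)).
move: a0 a1; case: (\int[P]_x (cond_acc eta Tm f x)%:E)%E => [r| |] //=.
rewrite !lee_fin => r0 r1.
by rewrite -EFinB /= ler0_norm ?subr_le0 // opprB.
Qed.

End Helpers.

Theorem theorem2 (R : realType) :
  exists c : R, 0 <= c /\
  forall (K : nat) (d : measure_display) (X : measurableType d)
    (P : probability X R)
    (eta : X -> 'I_K -> R) (Tm : X -> 'I_K -> 'I_K -> R)
    (ystar : X -> 'I_K) (kstar : X -> 'I_K -> 'I_K),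
    (* regularity *)
    (forall k, measurable_fun setT (fun x => eta x k)) ->
    (forall i j, measurable_fun setT (fun x => Tm x i j)) ->
    (forall k, measurable [set x | ystar x = k]) ->
    (forall j k, measurable [set x | kstar x j = k]) ->
    (* eta is the clean posterior, T(x) a transition matrix *)
    (forall x, is_prob_vector (eta x)) ->
    (forall x i, is_prob_vector (Tm x i)) ->
    (* diagonal dominance *)
    (forall x i j, i != j -> Tm x i j < Tm x i i) ->
    (* Y*(x) = argmax_k eta_k(x) and k*(j) = argmax_k T_kj(x) (any tie-breaking) *)
    (forall x k, eta x k <= eta x (ystar x)) ->
    (forall x j k, Tm x k j <= Tm x (kstar x j) j) ->
    let delta := fun x => 1 - eta x (ystar x) in
    let fNC := fun (x : X) (j : 'I_K) => j in
    let fFC := kstar in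
    let Cst := fun x => \sum_(j < K | kstar x j == ystar x) Tm x (ystar x) j in
    let Edelta := (\int[P]_x (delta x)%:E)%E in
    (* (a) *)
    (`| ACC P eta Tm fNC
        - \int[P]_x ((1 - delta x) * Tm x (ystar x) (ystar x))%:E | <= c%:E * Edelta)%E /\
    (`| ACC P eta Tm fFC
        - \int[P]_x ((1 - delta x) * Cst x)%:E | <= c%:E * Edelta)%E /\
    (* (b) *)
    (forall x j, confidence (@onehot R K (fNC x j)) = 1) /\
    (forall x j, confidence (@onehot R K (fFC x j)) = 1) /\
    (forall S : seq R, uniq S ->
       (forall x j, confidence (@onehot R K (fNC x j)) \in S) ->
       ECE P eta Tm (fun x j => @onehot R K (fNC x j)) fNC S = (1 - ACC P eta Tm fNC)%E) /\
    (forall S : seq R, uniq S ->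
       (forall x j, confidence (@onehot R K (fFC x j)) \in S) ->
       ECE P eta Tm (fun x j => @onehot R K (fFC x j)) fFC S = (1 - ACC P eta Tm fFC)%E).
Proof.
exists 1; split => // K d X P eta Tm ystar kstar me mT my mk he hT hdd hy hk.
move=> delta fNC fFC Cst Edelta.
have mNC : forall i j, measurable_fun setT (fun x => (((fNC x j) == i)%:R : R)).
  by move=> i j; exact: measurable_cst.
have mFC : forall i j, measurable_fun setT (fun x => (((fFC x j) == i)%:R : R)).
  by move=> i j; apply: mf_indic.
have [x0 _] : exists x : X, True.
  case: (pselect (exists x : X, True)) => // nX; exfalso.
  have e : (setT : set X) = set0 by apply/seteqP; split => x // _; apply: nX; exists x.
  have := probability_setT P; rewrite e measure0 => /eqP.
  by rewrite eqe eq_sym oner_eq0.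
have aNC : forall x (t : 'I_K -> R) (i : 'I_K),
    \sum_(j < K) t j * ((fNC x j == i)%:R) = t i.
  move=> x t i; rewrite (bigD1 i) //= eqxx mulr1 big1 ?addr0 //.
  by move=> j /negbTE ->; rewrite mulr0.
split; [|split; [|split; [|split; [|split]]]].
- rewrite (eq_integral (fun x => (eta x (ystar x) *
        \sum_(j < K) Tm x (ystar x) j * ((fNC x j == ystar x)%:R))%:E)).
    exact: main_a.
  by move=> x _; rewrite aNC /delta opprB addrC subrK.
- rewrite (eq_integral (fun x => (eta x (ystar x) *
        \sum_(j < K) Tm x (ystar x) j * ((fFC x j == ystar x)%:R))%:E)).
    exact: main_a.
  move=> x _; rewrite /delta opprB addrC subrK /Cst big_mkcond /=.
  congr (EFin (_ * _)); apply: eq_bigr => j _.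
  by case: (fFC x j == ystar x); rewrite ?mulr1 ?mulr0.
- by move=> x j; apply: conf1.
- by move=> x j; apply: conf1.
- move=> S uS hS; apply: ece_lemma => //.
    exact: mf_cond.
  by have := hS x0 (ystar x0); rewrite conf1.
- move=> S uS hS; apply: ece_lemma => //.
    exact: mf_cond.
  by have := hS x0 (ystar x0); rewrite conf1.
Qed.
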